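(* Let $d\ge1$, $f$ a monic hyperbolic polynomial of degree $d$, $0\le s\le d$, and $u$ a composition of $d$ with $\ell(u)\le s$. Then $H_s^u(f)$ contains at most one polynomial.
   Context: Hyperbolic: all roots real. $f=t^d+f_1t^{d-1}+\dots+f_d$; $H_s(f)$ is the set of monic hyperbolic degree-$d$ polynomials $h=t^d+h_1t^{d-1}+\dots+h_d$ with $h_i=f_i$ for $1\le i\le s$. Compositions of $d$: tuples of positive integers summing to $d$, length $\ell(u)$; $v\le u$ iff $v$ arises from $u$ by merging consecutive parts. $v(h)$ is the tuple of multiplicities of the distinct roots of $h$ in increasing order; $H_s^u(f)=\{h\in H_s(f):v(h)\le u\}$. *)

(* Defs.v *)
From HB Require Import structures.
From mathcomp Require Import all_boot all_order all_algebra.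
From mathcomp Require Import reals.
Set Implicit Arguments. Unset Strict Implicit. Unset Printing Implicit Defensive.
Import Order.TTheory GRing.Theory Num.Theory.
Local Open Scope ring_scope.

(* A polynomial is hyperbolic if all its (complex) roots are real, i.e. it
   splits into linear factors over R (up to its leading coefficient). *)
Definition hyperbolic (R : realType) (p : {poly R}) : Prop :=
  exists rs : seq R, p = lead_coef p *: \prod_(r <- rs) ('X - r%:P).

(* Coefficient h_i of t^(d-i) in h = t^d + h_1 t^(d-1) + ... + h_d. *)
Definition hcoef (R : realType) (d : nat) (h : {poly R}) (i : nat) : R :=
  h`_(d - i).

Definition H_s (R : realType) (d s : nat) (f h : {poly R}) : Prop :=
  [/\ h \is monic, size h = d.+1, hyperbolic h &
      forall i, (1 <= i <= s)%N -> hcoef d h i = hcoef d f i].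

Definition composition (d : nat) (u : seq nat) : Prop :=
  all (fun k => 0 < k)%N u /\ sumn u = d.

(* v <= u : v arises from u by merging consecutive parts *)
Definition comp_le (v u : seq nat) : Prop :=
  exists w : seq nat, [/\ all (fun k => 0 < k)%N w, sumn w = size u &
                         v = map sumn (reshape w u)].

Definition mult_vec (R : realType) (h : {poly R}) (v : seq nat) : Prop :=
  exists r : seq R, [/\ sorted <%R r, (forall x, root h x = (x \in r)) &
                       v = [seq mup x h | x <- r]].

Definition H_su (R : realType) (d s : nat) (u : seq nat) (f h : {poly R}) : Prop :=
  H_s d s f h /\ exists v, mult_vec h v /\ comp_le v u.

(* Main.v *)
Require Import Defs.
From HB Require Import structures.
From mathcomp Require Import all_boot all_order all_algebra.
From mathcomp Require Import reals.
From mathcomp.real_closed Require Import polyrcf.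
From mathcomp.algebra_tactics Require Import ring lra.
From mathcomp Require Import zify.
From Stdlib Require Import Lia.
Import Order.TTheory GRing.Theory Num.Theory.
Local Open Scope ring_scope.
Set Implicit Arguments. Unset Strict Implicit. Unset Printing Implicit Defensive.

Fixpoint changes (T : eqType) (s : seq T) : nat :=
  match s with
  | a :: ((b :: _) as t) => ((a != b) + changes t)%N
  | _ => 0%N
  end.

Definition expand (T : Type) (u : seq nat) (s : seq T) : seq T :=
  flatten [seq nseq p.1 p.2 | p <- zip u s].

Lemma expand_cons (T : Type) n u (x : T) s :
  expand (n :: u) (x :: s) = nseq n x ++ expand u s.
Proof. by []. Qed.

Lemma expand_nil_r (T : Type) u : expand u ([::] : seq T) = [::].
Proof. by case: u. Qed.

Lemma expand_nil_l (T : Type) (s : seq T) : expand [::] s = [::].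
Proof. by case: s. Qed.

Lemma expand_cat (T : Type) a b (c d : seq T) :
  size a = size c -> expand (a ++ b) (c ++ d) = expand a c ++ expand b d.
Proof. by move=> h; rewrite /expand zip_cat // map_cat flatten_cat. Qed.

Lemma expand_nseq (T : Type) a (x : T) : expand a (nseq (size a) x) = nseq (sumn a) x.
Proof.
elim: a => [|n a IH]; first by [].
change (nseq n x ++ expand a (nseq (size a) x) = nseq (n + sumn a) x).
by rewrite IH nseqD.
Qed.

Lemma size_expand (T : Type) u (s : seq T) :
  size u = size s -> size (expand u s) = sumn u.
Proof.
elim: u s => [|n u IH] [|x s] //= [h].
by rewrite expand_cons size_cat size_nseq IH.
Qed.

Lemma expand_expand (T : Type) w u (r : seq T) :
  sumn w = size u -> size w = size r ->
  expand u (expand w r) = expand (map sumn (reshape w u)) r.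
Proof.
elim: w u r => [|n w IH] u [|x r] hs hr //.
- by rewrite !expand_nil_r.
move: hs hr => /= hs [hr].
have st : size (take n u) = n by rewrite size_takel //; lia.
change (expand u (nseq n x ++ expand w r) =
  nseq (sumn (take n u)) x ++ expand (map sumn (reshape w (drop n u))) r).
have -> : nseq n x = nseq (size (take n u)) x by rewrite st.
rewrite -{1}(cat_take_drop n u) expand_cat ?size_nseq // expand_nseq IH //.
rewrite size_drop; lia.
Qed.

Lemma mem_expand (T : eqType) (x : T) u s : x \in expand u s -> x \in s.
Proof.
elim: u s => [|n u IH] [|y s] //; rewrite ?expand_nil_l ?expand_nil_r //.
rewrite expand_cons mem_cat inE => /orP[/nseqP [-> _]|/IH ->].
  by rewrite eqxx.
by rewrite orbT.
Qed.

Lemma pairwise_nseq (T : Type) (e : rel T) n x : reflexive e -> pairwise e (nseq n x).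
Proof.
move=> re; elim: n => [|n IH] //=; rewrite IH andbT.
by rewrite all_nseq re orbT.
Qed.

Lemma pairwise_expand (T : eqType) (e : rel T) u s :
  reflexive e -> pairwise e s -> pairwise e (expand u s).
Proof.
move=> re; elim: u s => [|n u IH] [|x s] //; rewrite ?expand_nil_l ?expand_nil_r //.
move=> /= /andP[ax ps]; rewrite expand_cons pairwise_cat pairwise_nseq // IH // andbT.
rewrite andbT; apply/allrelP => a b /nseqP [-> _] /mem_expand bs.
by move/allP: ax; apply.
Qed.

Lemma zip_nseq (S T : Type) n (x : S) (y : T) : zip (nseq n x) (nseq n y) = nseq n (x, y).
Proof. by elim: n => //= n ->. Qed.

Lemma zip_expand (S T : Type) u (y : seq S) (z : seq T) :
  size y = size u -> size z = size u ->
  zip (expand u y) (expand u z) = expand u (zip y z).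
Proof.
elim: u y z => [|n u IH] [|a y] [|b z] //= [hy] [hz].
rewrite !expand_cons zip_cat ?size_nseq // zip_nseq IH //.
Qed.

Lemma changes_tail (T : eqType) (a : T) t : (changes t <= changes (a :: t))%N.
Proof. by case: t => [|b t] //=; rewrite leq_addl. Qed.

Lemma changes_nseq_cat (T : eqType) n (x : T) t :
  (changes (nseq n x ++ t) <= changes t + (t != [::]))%N.
Proof.
elim: n => [|n IH] /=; first exact: leq_addr.
case: n IH => [|n] IH /=.
  case: t {IH} => [|b t] //=; rewrite addnC leq_add2l; by case: (x != b).
by rewrite eqxx add0n.
Qed.

Lemma changes_expand (T : eqType) u (s : seq T) : (changes (expand u s) <= (size u).-1)%N.
Proof.
elim: u s => [|n u IH] [|x s] //; rewrite ?expand_nil_l ?expand_nil_r //.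
rewrite expand_cons (leq_trans (changes_nseq_cat _ _ _)) //=.
have := IH s; case: u {IH} => [|m u]; first by rewrite expand_nil_l.
move=> /= h; rewrite (leq_trans (leq_add h (leq_b1 _))) //.
by rewrite addn1.
Qed.

Lemma count_expand (T : eqType) (F : T -> nat) (r : seq T) a :
  uniq r -> count_mem a (expand (map F r) r) = if a \in r then F a else 0%N.
Proof.
elim: r => [|x r IH] /=; first by [].
move=> /andP[xr ur]; rewrite expand_cons count_cat count_nseq IH // inE.
case: (eqVneq x a) => [<-|nxa] /=.
  by rewrite eqxx (negbTE xr) mul1n addn0.
by rewrite (negbTE nxa) mul0n add0n.
Qed.

Lemma changes_drop (T : eqType) (a b : T) t :
  (changes (a :: t) <= changes (a :: b :: t))%N.
Proof.
case: t => [|c t] /=; first exact: leq0n.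
rewrite addnA leq_add2r.
case: (eqVneq a b) => [->|_]; first by rewrite add0n.
by case: (a != c).
Qed.

Definition between (R : realType) (x a b : R) := ((a <= x <= b) || (b <= x <= a)).

Definition Good (R : realType) (q : {poly R}) (ps : seq (R * R)) :=
  forall p, p \in ps -> forall x, between x p.1 p.2 -> 0 <= q.[x] * (p.2 - p.1).

Definition rel2 (R : realType) : rel (R * R) :=
  fun p p' => (p.1 <= p'.1) && (p.2 <= p'.2).

Lemma sign_tr (R : realType) (a b c : R) : 0 <= a * b -> 0 < b * c -> 0 <= a * c.
Proof. move=> h1 h2; nra. Qed.

Lemma sign_tr2 (R : realType) (a b c e : R) :
  0 <= a * b -> b * c < 0 -> e <= 0 -> 0 <= a * e * c.
Proof.
move=> h1 h2 h3.
have h4 : 0 <= a * (- c) by apply: (sign_tr h1); lra.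
have -> : a * e * c = (a * (- c)) * (- e) by ring.
by apply: mulr_ge0 => //; lra.
Qed.

Lemma head_build (R : realType) (ps : seq (R * R)) (y1 z1 : R) :
  y1 != z1 -> pairwise (@rel2 R) ((y1, z1) :: ps) ->
  exists q : {poly R}, [/\ q != 0, (size q <= (changes ((y1, z1) :: ps)).+1)%N,
    Good q ((y1, z1) :: ps) &
    forall x, (x <= y1) || (x <= z1) -> 0 <= q.[x] * (z1 - y1)].
Proof.
elim: ps y1 z1 => [|[y2 z2] ps IH] y1 z1 nyz.
  move=> _; exists (z1 - y1)%:P; split.
  - by rewrite polyC_eq0 subr_eq0 eq_sym.
  - by rewrite size_polyC; case: (_ != 0).
  - move=> p; rewrite mem_seq1 => /eqP -> x _ /=; rewrite hornerC; nra.
  - move=> x _; rewrite hornerC; nra.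
move=> /= /andP[/andP[r12 a1] /andP[a2 pw]].
move: r12; rewrite /rel2 /= => /andP[ly lz].
have [e2|n2] := eqVneq y2 z2.
  have [q [q0 sq gq tq]] := IH y1 z1 nyz (introT andP (conj a1 pw)).
  exists q; split => //.
  - by apply: leq_trans sq _; rewrite ltnS; exact: changes_drop.
  - move=> p; rewrite !inE => /orP[/eqP->|/orP[/eqP->|pin]] x bx.
    + exact: gq (mem_head _ _) x bx.
    + by rewrite /= e2 subrr mulr0.
    + by apply: gq => //; rewrite inE pin orbT.
have [q [q0 sq gq tq]] := IH y2 z2 n2 (introT andP (conj a2 pw)).
have [same|opp] := ltrP 0 ((z1 - y1) * (z2 - y2)).
  exists q; split => //.
  - apply: leq_trans sq _; rewrite /= ltnS; exact: leq_addl.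
  - move=> p; rewrite inE => /orP[/eqP->|pin] x bx; last exact: gq.
    have := tq x; rewrite /between /= in bx.
    have hx : (x <= y2) || (x <= z2).
      case/orP: bx => /andP[_ h]; apply/orP; [right|left]; lra.
    by move=> /(_ hx) h; apply: (sign_tr h); rewrite mulrC.
  - move=> x hx; have hx2 : (x <= y2) || (x <= z2).
      case/orP: hx => h; apply/orP; [left|right]; lra.
    by apply: (sign_tr (tq x hx2)); rewrite mulrC.
have opp' : (z1 - y1) * (z2 - y2) < 0.
  rewrite lt_neqAle opp andbT mulf_eq0 !subr_eq0 negb_or.
  by rewrite eq_sym nyz eq_sym n2.
pose c := if y2 < z2 then y2 else z2.
have hc : (c <= y2) && (c <= z2) && ((c == y2) || (c == z2)).
  rewrite /c; case: ltrP => h; rewrite ?eqxx ?orbT ?andbT lexx /=; lra.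
have hmax : (y1 <= c) && (z1 <= c).
  rewrite /c; case: ltrP => h.
  - have : z1 - y1 < 0 by nra. lra.
  - have : y2 != z2 by []. rewrite neq_lt => /orP[h'|h']; first lra.
    have : 0 < z1 - y1 by nra. lra.
move/andP: hc => [/andP[cy cz] ceq]; move/andP: hmax => [c1 c2].
exists (q * ('X - c%:P)); split.
- by rewrite mulf_neq0 // polyXsubC_eq0.
- rewrite size_mul ?polyXsubC_eq0 // size_XsubC addn2 /=.
  have -> : ((y1, z1) != (y2, z2)) = true.
    apply/negP => /eqP [e1 e2]; move: opp'; rewrite e1 e2; nra.
  by rewrite add1n ltnS.
- move=> p; rewrite inE => /orP[/eqP->|pin] x bx; rewrite hornerM hornerXsubC.
  + rewrite /between /= in bx.
    have hx : (x <= y2) || (x <= z2) by apply/orP; left; case/orP: bx => /andP[b1 b2]; lra.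
    by apply: (sign_tr2 (tq x hx)); [rewrite mulrC | lra].
  + have := gq p pin x bx; move: bx pin; rewrite /between inE.
    move=> bx /orP[/eqP pe|pin'] h.
      rewrite pe /= in bx h *; rewrite mulrAC; apply: mulr_ge0 => //; lra.
    have : rel2 (y2, z2) p by move/allP: a2; apply.
    rewrite /rel2 /= => /andP[r1 r2].
    rewrite mulrAC; apply: mulr_ge0 => //; lra.
- move=> x hx; rewrite hornerM hornerXsubC.
  have hx2 : (x <= y2) || (x <= z2) by apply/orP; left; case/orP: hx => hh; lra.
  by apply: (sign_tr2 (tq x hx2)); [rewrite mulrC | lra].
Qed.

Lemma build (R : realType) (ps : seq (R * R)) :
  pairwise (@rel2 R) ps -> has (fun p => p.1 != p.2) ps ->
  exists q : {poly R}, [/\ q != 0, (size q <= (changes ps).+1)%N & Good q ps].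
Proof.
elim: ps => [|[y z] ps IH] //= /andP[a pw] /orP[nyz|hps].
  have [q [q0 sq gq _]] := head_build nyz (introT andP (conj a pw)).
  by exists q.
have [q [q0 sq gq]] := IH pw hps.
case: (eqVneq y z) => [eyz|nyz].
  exists q; split => //.
    by apply: leq_trans sq _; rewrite ltnS; exact: changes_tail.
  move=> p; rewrite inE => /orP[/eqP->|pin] x bx; last exact: gq.
  by rewrite /= eyz subrr mulr0.
have [q' [q0' sq' gq' _]] := head_build nyz (introT andP (conj a pw)).
by exists q'.
Qed.

Lemma zero_on_itv (R : realType) (P : {poly R}) (a b : R) :
  a < b -> (forall x, a <= x <= b -> P.[x] = 0) -> P = 0.
Proof.
move=> ab hP; apply/eqP; apply/negPn/negP => P0.
pose f := fun i : nat => a + (b - a) / (i.+1)%:R.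
suff: (size (mkseq f (size P)) < size P)%N by rewrite size_mkseq ltnn.
apply: max_poly_roots P0 _ _.
  apply/allP => x /mapP [i _ ->]; apply/eqP/hP.
  have h1 : 0 < (i.+1)%:R :> R by rewrite ltr0n.
  have h2 : 0 <= (b - a) / (i.+1)%:R by rewrite divr_ge0 ?subr_ge0 ?ltW.
  have h3 : (b - a) / (i.+1)%:R <= b - a.
    rewrite ler_pdivrMr // ler_peMr ?ler1n ?subr_ge0 //; exact: ltW.

  rewrite /f; move: h2 h3; set t := (b - a) / _ => h2 h3.
  apply/andP; split; lra.
apply: mkseq_uniq => i j; rewrite /f => /addrI /mulfI.
have : b - a != 0 by rewrite subr_eq0 gt_eqF.
move=> h /(_ h) /invr_inj /eqP; rewrite eqr_nat => /eqP [].
done.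
Qed.

Lemma strict_mono (R : realType) (Q : {poly R}) (a b : R) :
  a < b -> Q^`() != 0 -> (forall x, a <= x <= b -> 0 <= Q^`().[x]) ->
  Q.[a] < Q.[b].
Proof.
move=> ab q0 hq.
have mono : {in `[a, b] &, {homo horner Q : x y / x <= y}}.
  apply: ler_hornerW => x; rewrite in_itv /= => /andP[h1 h2].
  by apply: hq; apply/andP; split; apply: ltW.
have ina : a \in `[a, b] by rewrite in_itv /= lexx ltW.
have inb : b \in `[a, b] by rewrite in_itv /= lexx ltW.
rewrite lt_neqAle (mono a b ina inb (ltW ab)) andbT.
apply/negP => /eqP eab; move: q0.
have : Q - Q.[a]%:P = 0.
  apply: (zero_on_itv ab) => x /andP[h1 h2].
  have inx : x \in `[a, b] by rewrite in_itv /= h1 h2.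
  have := mono a x ina inx h1; have := mono x b inx inb h2.
  rewrite hornerD hornerN hornerC; lra.
move/eqP; rewrite subr_eq0 => /eqP ->.
by rewrite derivC eqxx.
Qed.

Lemma antideriv (R : realType) (q : {poly R}) :
  exists Q : {poly R}, Q^`() = q /\ (size Q <= (size q).+1)%N.
Proof.
exists (\poly_(i < (size q).+1) (if i == 0%N then 0 else q`_i.-1 / i%:R)).
split; last exact: size_poly.
apply/polyP => i; rewrite coef_deriv coef_poly ltnS.
case: ltnP => hi.
  by rewrite -[LHS]mulr_natr /= divfK // pnatr_eq0.
rewrite [RHS]nth_default //; exact: mul0rn.
Qed.

Definition Gp (R : realType) (N : nat) (r : R) : {poly R} := \poly_(i < N.+1) r ^+ (N - i).
Definition PR (R : realType) (rho : seq R) : {poly R} := \prod_(r <- rho) ('X - r%:P).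
Definition Tp (R : realType) (N : nat) (rho : seq R) : {poly R} := \sum_(r <- rho) Gp N r.

Lemma Gp_mul (R : realType) N (r : R) :
  ('X - r%:P) * Gp N r = 'X^(N.+1) - (r ^+ N.+1)%:P.
Proof.
apply/polyP => i; rewrite mulrBl coefB coefXM coefCM coefB coefXn coefC !coef_poly.
case: i => [|k] /=.
  by rewrite subn0 -exprS.
rewrite eqSS ltnS subr0 ltnS.
case: (ltngtP k N) => hk.
- by rewrite -(subnSK hk) exprS subrr.
- by rewrite mulr0 subrr.
- by rewrite hk subnn expr0 ?ltnn mulr0 subr0.
Qed.

Lemma size_Gp (R : realType) N (r : R) : (size (Gp N r) <= N.+1)%N.
Proof. exact: size_poly. Qed.

Lemma size_Tp (R : realType) N (rho : seq R) : (size (Tp N rho) <= N.+1)%N.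
Proof.
rewrite /Tp; elim: rho => [|r rho IH]; first by rewrite big_nil size_poly0.
by rewrite big_cons (leq_trans (size_polyD _ _)) // geq_max size_Gp.
Qed.

Lemma size_PR (R : realType) (rho : seq R) : size (PR rho) = (size rho).+1.
Proof. by rewrite /PR size_prod_XsubC. Qed.

Lemma D_size (R : realType) N (rho : seq R) :
  (size ('X^(N.+1) * (PR rho)^`() - PR rho * Tp N rho)%R <= size rho)%N.
Proof.
elim: rho => [|r rho IH].
  by rewrite /PR /Tp !big_nil derivC mulr0 mulr0 subrr size_poly0.
have -> : 'X^(N.+1) * (PR (r :: rho))^`() - PR (r :: rho) * Tp N (r :: rho) =
  ('X - r%:P) * ('X^(N.+1) * (PR rho)^`() - PR rho * Tp N rho) +
  (r ^+ N.+1)%:P * PR rho.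
  rewrite /PR /Tp !big_cons derivM derivXsubC mul1r.
  rewrite -/(PR rho) -/(Tp N rho).
  have := Gp_mul N r.
  move=> hG.
  transitivity ('X^(N.+1) * PR rho + ('X - r%:P) * ('X^(N.+1) * (PR rho)^`() - PR rho * Tp N rho)
     - PR rho * (('X - r%:P) * Gp N r)); first by ring.
  rewrite hG; ring.
rewrite (leq_trans (size_polyD _ _)) // geq_max; apply/andP; split.
  rewrite (leq_trans (size_polyMleq _ _)) // size_XsubC.
  move: IH; set m := size _; move=> IH /=; lia.
rewrite (leq_trans (size_polyMleq _ _)) //= size_PR.
by rewrite size_polyC; case: (_ != 0).
Qed.

Lemma Tp_eq (R : realType) (s d : nat) (rho1 rho2 : seq R) :
  size rho1 = d -> size rho2 = d -> (s <= d)%N ->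
  (size (PR rho1 - PR rho2)%R <= d - s)%N -> Tp s rho1 = Tp s rho2.
Proof.
move=> s1 s2 sd sE.
set E := PR rho1 - PR rho2.
set D1 := 'X^(s.+1) * (PR rho1)^`() - PR rho1 * Tp s rho1.
set D2 := 'X^(s.+1) * (PR rho2)^`() - PR rho2 * Tp s rho2.
have key : PR rho2 * (Tp s rho1 - Tp s rho2) =
  'X^(s.+1) * E^`() - E * Tp s rho1 - (D1 - D2).
  by rewrite /E /D1 /D2 derivB; ring.
have hD1 : (size D1 <= d)%N by rewrite -s1 D_size.
have hD2 : (size D2 <= d)%N by rewrite -s2 D_size.
have hA : (size ('X^(s.+1) * E^`())%R <= d)%N.
  have [->|E'0] := eqVneq E^`() 0; first by rewrite mulr0 size_poly0.
  have E0 : E != 0 by apply: contra E'0 => /eqP ->; rewrite derivC.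
  have := lt_size_deriv E0.
  have hX : size ('X^(s.+1) : {poly R}) = s.+2 by apply: size_polyXn.
  rewrite size_mul ?hX //; last by rewrite -size_poly_eq0 hX.
  move: sE; set a := size E; set b := size E^`(); lia.
have hB : (size (E * Tp s rho1)%R <= d)%N.
  rewrite (leq_trans (size_polyMleq _ _)) //.
  have := size_Tp s rho1; move: sE; set a := size E; set b := size (Tp _ _); lia.
apply/eqP; rewrite -subr_eq0; apply/negPn/negP => nz.
have : (size (PR rho2 * (Tp s rho1 - Tp s rho2))%R <= d)%N.
  rewrite key (leq_trans (size_polyD _ _)) // geq_max.
  rewrite (leq_trans (size_polyD _ _)) ?geq_max ?hA ?size_polyN ?hB //=.
  rewrite (leq_trans (size_polyD _ _)) // geq_max hD1 size_polyN hD2.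
  done.
rewrite size_mul //; last by rewrite -size_poly_eq0 size_PR.
rewrite size_PR s2.
have : size (Tp s rho1 - Tp s rho2) != 0%N by rewrite size_poly_eq0.
set k := size _; lia.
Qed.

Lemma coef_Tp (R : realType) N k (rho : seq R) :
  (k <= N)%N -> (Tp N rho)`_(N - k) = \sum_(r <- rho) r ^+ k.
Proof.
move=> kN; rewrite /Tp coef_sum; apply: eq_bigr => r _.
by rewrite coef_poly ltnS leq_subr subKn.
Qed.

Lemma sum_horner_eq (R : realType) s (rho1 rho2 : seq R) (Q : {poly R}) :
  Tp s rho1 = Tp s rho2 -> (size Q <= s.+1)%N ->
  \sum_(r <- rho1) Q.[r] = \sum_(r <- rho2) Q.[r].
Proof.
move=> eT sQ.
have e : forall rho : seq R, \sum_(r <- rho) Q.[r] =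
    \sum_(i < size Q) Q`_i * \sum_(r <- rho) r ^+ i.
  move=> rho; under eq_bigr do rewrite horner_coef.
  rewrite exchange_big /=; apply: eq_bigr => i _.
  by rewrite mulr_sumr.
rewrite !e; apply: eq_bigr => i _.
have iS : (i <= s)%N by rewrite -ltnS (leq_trans (ltn_ord i)).
by rewrite -!(coef_Tp _ iS) eT.
Qed.

Lemma all_zip2 (R : realType) (a b : R) (y z : seq R) :
  all (fun x => a <= x) y -> all (fun x => b <= x) z ->
  all (@rel2 R (a, b)) (zip y z).
Proof.
elim: y z => [|c y IH] [|d z] //= /andP[ac ay] /andP[bd bz].
by rewrite IH // andbT /rel2 /= ac bd.
Qed.

Lemma pairwise_zip (R : realType) (y z : seq R) :
  pairwise <=%R y -> pairwise <=%R z -> pairwise (@rel2 R) (zip y z).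
Proof.
elim: y z => [|a y IH] [|b z] //= /andP[ay py] /andP[bz pz].
by rewrite IH // andbT all_zip2.
Qed.

Lemma sum_zip_diff (R : realType) (F : R -> R) (a b : seq R) :
  size a = size b ->
  \sum_(p <- zip a b) (F p.2 - F p.1) = \sum_(x <- b) F x - \sum_(x <- a) F x.
Proof.
move=> hs; rewrite sumrB.
have e2 : \sum_(x <- b) F x = \sum_(p <- zip a b) F p.2.
  by rewrite -{1}(unzip2_zip (s := a) (t := b)) ?hs // big_map.
have e1 : \sum_(x <- a) F x = \sum_(p <- zip a b) F p.1.
  by rewrite -{1}(unzip1_zip (s := a) (t := b)) ?hs // big_map.
by rewrite e1 e2.
Qed.

Lemma sum_pos (R : realType) (F : R * R -> R) (ps : seq (R * R)) :
  (forall p, p \in ps -> 0 <= F p) -> has (fun p => 0 < F p) ps ->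
  0 < \sum_(p <- ps) F p.
Proof.
elim: ps => [|p ps IH] //= h hh; rewrite big_cons.
have h0 : 0 <= F p by apply: h; exact: mem_head.
have h' : forall q, q \in ps -> 0 <= F q by move=> q qin; apply: h; rewrite inE qin orbT.
have hs : 0 <= \sum_(q <- ps) F q.
  by rewrite big_seq; apply: sumr_ge0 => x; exact: h'.
case/orP: hh => [hp|hps]; first lra.
have := IH h' hps; lra.
Qed.

Lemma term_pos (R : realType) (q Q : {poly R}) (ps : seq (R * R)) p :
  Good q ps -> q != 0 -> Q^`() = q -> p \in ps -> p.1 != p.2 ->
  0 < Q.[p.2] - Q.[p.1].
Proof.
move=> gq q0 dQ pin np; have := gq p pin; case: (ltgtP p.1 p.2) np => // h _ gp.
  rewrite subr_gt0; apply: strict_mono => //; first by rewrite dQ.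
  move=> x hx; rewrite dQ; have := gp x; rewrite /between hx => /(_ isT) hh.
  nra.
have := @strict_mono R (- Q) p.2 p.1 h.
rewrite derivN dQ oppr_eq0 q0 !hornerN => /(_ isT) hh.
suff : - Q.[p.2] < - Q.[p.1] by lra.
apply: hh => x hx; rewrite hornerN; have := gp x; rewrite /between hx orbT => /(_ isT) hh.
nra.
Qed.

Lemma term_nonneg (R : realType) (q Q : {poly R}) (ps : seq (R * R)) p :
  Good q ps -> q != 0 -> Q^`() = q -> p \in ps -> 0 <= Q.[p.2] - Q.[p.1].
Proof.
move=> gq q0 dQ pin; case: (eqVneq p.1 p.2) => [->|np]; first by rewrite subrr.
exact/ltW/(term_pos gq q0 dQ pin np).
Qed.

Lemma decomp (R : realType) d s u (f h : {poly R}) :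
  H_su d s u f h ->
  exists y : seq R, [/\ size y = size u, pairwise <=%R y & h = PR (expand u y)].
Proof.
case=> [[hm hsz [rs hrs] hco] [v [[r [sr hr hv]] [w [wpos sw hvw]]]]].
have hPR : h = PR rs by rewrite [LHS]hrs (monicP hm) scale1r.
have szw : size w = size r.
  by rewrite -(size_reshape w u) -(size_map sumn) -hvw hv size_map.
have ur : uniq r by exact: (sorted_uniq lt_trans ltxx sr).
exists (expand w r); split.
- by rewrite size_expand.
- apply: pairwise_expand; first by move=> a; exact: lexx.
  rewrite -sorted_pairwise; last exact: le_trans.
  by apply: sub_sorted sr => a b; exact: ltW.
- rewrite expand_expand // -hvw hv {1}hPR /PR; apply: perm_big.
  apply/allP => a _; apply/eqP.
  rewrite count_expand //; case: ifP => ain.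
    by rewrite hPR mu_prod_XsubC.
  apply/count_memPn; rewrite -root_prod_XsubC -/(PR rs) -hPR hr ain.
  done.
Qed.

Unset Implicit Arguments.

Theorem mainTheorem5 (R : realType) (d : nat) (f : {poly R}) (s : nat)
    (u : seq nat) :
  (1 <= d)%N -> f \is monic -> size f = d.+1 -> hyperbolic f ->
  (s <= d)%N -> composition d u -> (size u <= s)%N ->
  forall h1 h2 : {poly R}, H_su d s u f h1 -> H_su d s u f h2 -> h1 = h2.
Proof.
move=> d1 fm fs fh sd [upos usum] su h1 h2 H1 H2.
have [y [sy py ey]] := decomp H1.
have [z [sz pz ez]] := decomp H2.
have s1 : size (expand u y) = d by rewrite size_expand.
have s2 : size (expand u z) = d by rewrite size_expand.
have hc : (size (PR (expand u y) - PR (expand u z))%R <= d - s)%N.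
  rewrite -ey -ez; apply/leq_sizeP => j hj; rewrite coefB; apply/eqP; rewrite subr_eq0; apply/eqP.
  case: H1 => [[m1 sz1 _ c1] _]; case: H2 => [[m2 sz2 _ c2] _].
  case: (ltngtP j d) => hjd.
  - have hi : (1 <= d - j <= s)%N by apply/andP; split; lia.
    have := c1 _ hi; have := c2 _ hi; rewrite /hcoef subKn ?(ltnW hjd) //.
    by move=> -> ->.
  - by rewrite !nth_default // ?sz1 ?sz2.
  - have l1 : lead_coef h1 = h1`_d by rewrite lead_coefE sz1.
    have l2 : lead_coef h2 = h2`_d by rewrite lead_coefE sz2.
    by rewrite hjd -l1 -l2 (monicP m1) (monicP m2).
have eT := Tp_eq s1 s2 sd hc.
have [e|ne] := eqVneq (expand u y) (expand u z); first by rewrite ey ez e.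
exfalso.
set r1 := expand u y in s1 ne eT; set r2 := expand u z in s2 ne eT.
set ps := zip r1 r2.
have hps : has (fun p => p.1 != p.2) ps.
  apply/negPn/negP => /hasPn allq.
  have e1 : unzip1 ps = r1 by rewrite unzip1_zip // s1 s2.
  have e2 : unzip2 ps = r2 by rewrite unzip2_zip // s1 s2.
  have : unzip1 ps = unzip2 ps.
    by apply/eq_in_map => p /allq; rewrite negbK => /eqP.
  by rewrite e1 e2 => e; rewrite e eqxx in ne.
have eps : ps = expand u (zip y z) by rewrite /ps /r1 /r2 zip_expand.
have pps : pairwise (@rel2 R) ps.
  rewrite eps; apply: pairwise_expand; first by move=> p; rewrite /rel2 !lexx.
  exact: pairwise_zip.
have [q [q0 sq gq]] := build pps hps.
have hu : (0 < size u)%N by move: usum d1; case: (u) => //= <-.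
have sq' : (size q <= s)%N.
  apply: (leq_trans sq); have := changes_expand u (zip y z); rewrite -eps; lia.
have [Q [dQ sQ]] := antideriv q.
have sQ' : (size Q <= s.+1)%N by apply: (leq_trans sQ).
have eq := sum_horner_eq eT sQ'.
have hd := sum_zip_diff (fun x => Q.[x]) (etrans s1 (esym s2)).
have pos : 0 < \sum_(p <- ps) (Q.[p.2] - Q.[p.1]).
  apply: sum_pos.
    move=> p pin; exact: term_nonneg gq q0 dQ pin.
  move/hasP: hps => [p pin np]; apply/hasP; exists p => //.
  exact: term_pos gq q0 dQ pin np.
move: pos; rewrite /ps hd eq subrr ltxx.
done.
Qed.
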